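(* Let $w=(w_k)$ satisfy $w_k\ge w_0>0$ for all $k$, and let $1\le p<\infty$, $1\le q\le\infty$. Then the soft-thresholding mapping $\mathcal{S}_w:\ell^p\to\ell^q$, $\mathcal{S}_w(u)_k=\max\{0,|u_k|-w_k\}\,\mathrm{sgn}(u_k)$, is Newton differentiable at every $u\in\ell^p$, and a generalized derivative is given by $\mathcal{G}(u)\in L(\ell^p,\ell^q)$, $(\mathcal{G}(u)v)_k=v_k$ if $|u_k|>w_k$ and $(\mathcal{G}(u)v)_k=0$ if $|u_k|\le w_k$.
   Context: Let $X,Y$ be Banach spaces and $D\subset X$ open. A mapping $\mathcal{F}:D\to Y$ is called Newton (or slantly) differentiable at $x\in D$ if there exists a family of mappings $\mathcal{G}:D\to L(X,Y)$ such that $\lim_{h\to0}\|\mathcal{F}(x+h)-\mathcal{F}(x)-\mathcal{G}(x+h)h\|_Y/\|h\|_X=0$; $\mathcal{G}$ is then called a generalized derivative (slanting function) of $\mathcal{F}$ at $x$. $\ell^p$ denotes the space of $p$-summable real sequences ($\ell^\infty$ the bounded sequences) with the usual norm. *)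

(* Defs.v *)
From HB Require Import structures.
From mathcomp Require Import all_boot all_order all_algebra.
From mathcomp Require Import all_classical all_reals all_analysis.
Set Implicit Arguments. Unset Strict Implicit. Unset Printing Implicit Defensive.
Import Order.TTheory GRing.Theory Num.Theory.
Import numFieldNormedType.Exports.
Local Open Scope classical_set_scope.
Local Open Scope ring_scope.

Section Lp.
Variable R : realType.

Definition lp_mem (p : R) (u : nat -> R) : Prop :=
  cvgn (series (fun k => `|u k| `^ p)).

Definition lp_norm (p : R) (u : nat -> R) : R :=
  (limn (series (fun k => `|u k| `^ p))) `^ (p^-1).

Definition linf_mem (u : nat -> R) : Prop :=
  exists M : R, forall k, `|u k| <= M.

Definition linf_norm (u : nat -> R) : R :=
  sup (range (fun k => `|u k|)).

Definition lq_mem (q : \bar R) (u : nat -> R) : Prop :=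
  match q with
  | EFin r => lp_mem r u
  | _ => linf_mem u
  end.

Definition lq_norm (q : \bar R) (u : nat -> R) : R :=
  match q with
  | EFin r => lp_norm r u
  | _ => linf_norm u
  end.

Definition soft_threshold (w : nat -> R) (u : nat -> R) : nat -> R :=
  fun k => Num.max 0 (`|u k| - w k) * Num.sg (u k).

Definition soft_threshold_G (w : nat -> R) (u : nat -> R) (v : nat -> R) : nat -> R :=
  fun k => if w k < `|u k| then v k else 0.

Definition bounded_linear_lp_lq (p : R) (q : \bar R) (A : (nat -> R) -> (nat -> R)) : Prop :=
  (forall (a b : R) (v v' : nat -> R), lp_mem p v -> lp_mem p v' ->
      A (fun k => a * v k + b * v' k) = (fun k => a * A v k + b * A v' k))
  /\ (forall v, lp_mem p v -> lq_mem q (A v))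
  /\ (exists C : R, forall v, lp_mem p v -> lq_norm q (A v) <= C * lp_norm p v).

Definition newton_differentiable_lp_lq (p : R) (q : \bar R)
    (F : (nat -> R) -> (nat -> R)) (G : (nat -> R) -> (nat -> R) -> (nat -> R))
    (x : nat -> R) : Prop :=
  (forall y, lp_mem p y -> bounded_linear_lp_lq p q (G y)) /\
  (forall eps : R, 0 < eps -> exists delta : R, 0 < delta /\
     forall h, lp_mem p h -> 0 < lp_norm p h < delta ->
       lq_norm q (fun k => F (fun j => x j + h j) k - F x k
                             - G (fun j => x j + h j) h k)
         <= eps * lp_norm p h).

End Lp.

(* Main.v *)
Require Import Defs.
From mathcomp Require Import all_boot all_order all_algebra.
From mathcomp Require Import all_classical all_reals all_analysis.
From mathcomp Require Import lra.
Import Order.TTheory GRing.Theory Num.Theory.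
Import numFieldNormedType.Exports.
Local Open Scope ring_scope.

Section S.
Variable R : realType.

Lemma soft_eq (w a : R) : 0 < w ->
  Num.max 0 (`|a| - w) * Num.sg a = (if w < a then a - w else if a < - w then a + w else 0).
Proof.
move=> w0.
case: (ltrgtP a 0) => ha.
- rewrite ltr0_norm // ltr0_sg // mulrN1.
  case: ifP => h1; first lra.
  case: ifP => h2.
  + rewrite max_r; [lra|lra].
  + rewrite max_l; [lra|lra].
- rewrite gtr0_norm // gtr0_sg // mulr1.
  case: ifP => h1.
  + rewrite max_r; [lra|lra].
  + rewrite max_l; last lra. case: ifP => //; lra.
- rewrite ha sgr0 mulr0. case: ifP; [lra|]. case: ifP; lra.
Qed.

Definition gap (a w : R) := if `|a| == w then w else `| `|a| - w |.

Lemma resid0 (w a t : R) : 0 < w -> `|t| < gap a w ->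
  Num.max 0 (`|a + t| - w) * Num.sg (a + t) - Num.max 0 (`|a| - w) * Num.sg a
  - (if w < `|a + t| then t else 0) = 0.
Proof.
move=> w0; rewrite /gap !soft_eq //.
have Ht : -`|t| <= t <= `|t| by rewrite -ler_norml.
case: (lerP 0 a) => ha; [rewrite (ger0_norm ha)|rewrite (ltr0_norm ha)];
case: (lerP 0 (a+t)) => hat; [rewrite (ger0_norm hat)|rewrite (ltr0_norm hat)|rewrite (ger0_norm hat)|rewrite (ltr0_norm hat)];
case: eqP => he;
 try (case: (lerP 0 (a - w)) => haw; [rewrite (ger0_norm haw)|rewrite (ltr0_norm haw)]);
 try (case: (lerP 0 (-a - w)) => haw; [rewrite (ger0_norm haw)|rewrite (ltr0_norm haw)]);
 move=> ht; repeat case: ifP => ?; lra.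
Qed.

Local Open Scope classical_set_scope.

Lemma bounded_series (f : nat -> R) (B : R) : (forall k, 0 <= f k) ->
  (forall n, series f n <= B) -> cvgn (series f) /\ limn (series f) <= B.
Proof.
move=> f0 fB.
have nd : nondecreasing_seq (series f).
  by apply: (@nondecreasing_series _ f xpredT 0) => n _ _; exact: f0.
have cv : cvgn (series f).
  by apply: nondecreasing_is_cvgn => //; exists B => _ [n _ <-].
split=> //; apply: limr_le => //; exact: nearW.
Qed.

Lemma series_nd (f : nat -> R) : (forall k, 0 <= f k) -> nondecreasing_seq (series f).
Proof. by move=> f0; apply: (@nondecreasing_series _ f xpredT 0) => n _ _; exact: f0. Qed.

Arguments series_nd {f}.
Arguments bounded_series {f B}.

Lemma lp_coord (p : R) (v : nat -> R) : 1 <= p -> lp_mem p v ->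
  forall k, `|v k| <= lp_norm p v.
Proof.
move=> p1 hv k.
set g := fun k => `|v k| `^ p.
have g0 : forall k, 0 <= g k by move=> i; exact: powR_ge0.
have h1 : g k <= limn (series g).
  apply: (le_trans _ (nondecreasing_cvgn_le (series_nd g0) hv k.+1)).
  rewrite seriesSr lerDr; apply: sumr_ge0 => i _; exact: g0.
have -> : `|v k| = g k `^ p^-1.
  by rewrite /g -powRrM mulfV ?powRr1 // gt_eqF // (lt_le_trans ltr01 p1).
rewrite /lp_norm; apply: ge0_ler_powR => //.
- by rewrite invr_ge0 (le_trans ler01 p1).
- by rewrite nnegrE.
- by rewrite nnegrE (le_trans _ h1).
Qed.

Lemma lp_tail (p : R) (u : nat -> R) : 1 <= p -> lp_mem p u ->
  forall c, 0 < c -> exists N, forall k, (N <= k)%N -> `|u k| < c.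
Proof.
move=> p1 hu c c0.
have p0 : 0 < p by rewrite (lt_le_trans ltr01 p1).
have := cvg_series_cvg_0 hu.
move=> /cvgrPdist_lt/(_ (c `^ p) (powR_gt0 _ c0)) [N _ HN].
exists N => k /HN; rewrite sub0r normrN ger0_norm ?powR_ge0 //.
rewrite ltNge => h; rewrite ltNge; apply/negP => ck; move/negP: h; apply.
apply: ge0_ler_powR => //; rewrite ?nnegrE ?ltW //.
Qed.

Definition Kq (q : \bar R) (N : nat) : R :=
  match q with EFin r => N%:R `^ r^-1 | _ => 1 end.

Lemma finsupp (q : \bar R) (f : nat -> R) (N : nat) (B : R) : (1%:E <= q)%E ->
  0 <= B -> (forall k, (N <= k)%N -> f k = 0) -> (forall k, `|f k| <= B) ->
  lq_mem q f /\ lq_norm q f <= Kq q N * B.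
Proof.
case: q => [r||] //= hq B0 fN fB.
- have r1 : 1 <= r by rewrite -lee_fin.
  have r0 : 0 < r by rewrite (lt_le_trans ltr01 r1).
  set g := fun k => `|f k| `^ r.
  have g0 : forall k, 0 <= g k by move=> i; exact: powR_ge0.
  have gB : forall k, g k <= B `^ r.
    by move=> k; apply: (ge0_ler_powR (ltW r0) _ _ (fB k)); rewrite nnegrE.
  have gN : forall n, series g n <= series g N.
    move=> n; case: (leqP n N) => hn; first exact: (series_nd g0).
    rewrite /series /= (@big_cat_nat _ _ _ N 0 n _ _ (leq0n N) (ltnW hn)) /=.
    have -> : \sum_(N <= k < n) g k = 0.
      by rewrite big_nat big1 // => k /andP[hk _]; rewrite /g fN // normr0 powR0 // gt_eqF.
    by rewrite addr0.
  have sN : series g N <= N%:R * B `^ r.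
    rewrite /series /=; apply: le_trans (_ : \sum_(0 <= k < N) B `^ r <= _).
      by apply: ler_sum => k _; exact: gB.
    by rewrite sumr_const_nat subn0 mulr_natl.
  have [cv lB] := bounded_series g0 (fun n => le_trans (gN n) sN).
  split=> //; rewrite /lp_norm.
  have l0 : 0 <= limn (series g).
    by apply: (le_trans _ (nondecreasing_cvgn_le (series_nd g0) cv 0)); rewrite /series /= big_geq.
  apply: le_trans (_ : (N%:R * B `^ r) `^ r^-1 <= _).
    apply: (ge0_ler_powR _ _ _ lB); rewrite ?nnegrE //.
      by rewrite invr_ge0 ltW.
    by rewrite mulr_ge0 ?powR_ge0.
  rewrite powRM ?powR_ge0 // -powRrM mulfV ?gt_eqF // powRr1 //.
- split; first by exists B.
  rewrite mul1r /linf_norm; apply: ge_sup; first by exists `|f 0%N|, 0%N.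
  by move=> _ [k _ <-].
Qed.

Lemma exists_d (N : nat) (g : nat -> R) : (forall k, 0 < g k) ->
  exists d, 0 < d /\ forall k, (k < N)%N -> d <= g k.
Proof.
move=> g0; elim: N => [|N [d [d0 hd]]]; first by exists 1.
exists (Num.min d (g N)); split; first by rewrite lt_min d0 g0.
move=> k; rewrite ltnS leq_eqVlt => /orP[/eqP->|hk]; first by rewrite ge_min lexx orbT.
by rewrite ge_min hd.
Qed.

Lemma soft_norm_le (w a : R) : 0 < w ->
  `|Num.max 0 (`|a| - w) * Num.sg a| <= `|a|.
Proof.
move=> w0; rewrite soft_eq // ler_norml.
case: (lerP 0 a) => ha; [rewrite (ger0_norm ha)|rewrite (ltr0_norm ha)];
repeat case: ifP => ?; apply/andP; split; lra.
Qed.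

Lemma soft_zero (w a : R) : 0 < w -> `|a| <= w ->
  Num.max 0 (`|a| - w) * Num.sg a = 0.
Proof.
move=> w0 aw; rewrite soft_eq //.
have : - `|a| <= a <= `|a| by rewrite -ler_norml.
move=> ?; case: ifP => ?; [lra|]; case: ifP => ?; [lra|] => //.
Qed.

Lemma gap_gt0 (a w : R) : 0 < w -> 0 < gap a w.
Proof.
move=> w0; rewrite /gap; case: eqP => // h.
by rewrite normr_gt0 subr_eq0; apply/eqP.
Qed.
End S.

Arguments lp_coord {R p v}.
Arguments lp_tail {R p u}.
Arguments finsupp {R q f}.
Arguments Kq {R}.
Arguments gap {R}.

Theorem proposition3p3 (R : realType) (w : nat -> R) (w0 : R)
    (hw0 : 0 < w0) (hw : forall k, w0 <= w k)
    (p : R) (q : \bar R) (hp : 1 <= p) (hq : (1%:E <= q)%E) :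
  (forall u, lp_mem p u -> lq_mem q (soft_threshold w u)) /\
  (forall u, lp_mem p u ->
     newton_differentiable_lp_lq p q (soft_threshold w) (soft_threshold_G w) u).
Proof.
have wp : forall k, 0 < w k by move=> k; exact: lt_le_trans hw0 (hw k).
split.
  move=> u hu; have [N HN] := lp_tail hp hu w0 hw0.
  apply: (proj1 (finsupp N (lp_norm p u) hq (powR_ge0 _ _) _ _)).
  - move=> k /HN hk; apply: soft_zero => //; exact: ltW (lt_le_trans hk (hw k)).
  - move=> k; apply: (le_trans (@soft_norm_le R _ _ (wp k))); exact: lp_coord.
move=> u hu; split.
  move=> y hy; split; [|split].
  - move=> a b v v' _ _; apply/funext => k; rewrite /soft_threshold_G.
    by case: ifP => _ //; rewrite !mulr0 addr0.
  - move=> v hv; have [N HN] := lp_tail hp hy w0 hw0.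
    apply: (proj1 (finsupp N (lp_norm p v) hq (powR_ge0 _ _) _ _)).
    + move=> k /HN hk; rewrite /soft_threshold_G; case: ifP => // h.
      by have := lt_trans (lt_le_trans hk (hw k)) h; rewrite ltxx.
    + move=> k; rewrite /soft_threshold_G; case: ifP => _; last by rewrite normr0 powR_ge0.
      exact: lp_coord.
  - have [N HN] := lp_tail hp hy w0 hw0.
    exists (Kq q N) => v hv.
    apply: (proj2 (finsupp N (lp_norm p v) hq (powR_ge0 _ _) _ _)).
    + move=> k /HN hk; rewrite /soft_threshold_G; case: ifP => // h.
      by have := lt_trans (lt_le_trans hk (hw k)) h; rewrite ltxx.
    + move=> k; rewrite /soft_threshold_G; case: ifP => _; last by rewrite normr0 powR_ge0.
      exact: lp_coord.
move=> eps eps0.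
have w20 : 0 < w0 / 2 by rewrite divr_gt0.
have [N HN] := lp_tail hp hu (w0 / 2) w20.
have [d [d0 hd]] := @exists_d R N _ (fun k => @gap_gt0 R (u k) _ (wp k)).
exists (Num.min d (w0 / 2)); split; first by rewrite lt_min d0 w20.
move=> h hh /andP[hpos hlt].
have hk : forall k, `|h k| < gap (u k) (w k).
  move=> k; have hc := le_lt_trans (lp_coord hp hh k) hlt.
  move: hc; rewrite lt_min => /andP[hc1 hc2].
  case: (ltnP k N) => kN; first exact: lt_le_trans hc1 (hd k kN).
  have uk := HN k kN; have wk := hw k.
  rewrite /gap; case: eqP => he; first lra.
  rewrite (@ltr0_norm _ (`|u k| - w k)); lra.
apply: le_trans (proj2 (finsupp 0%N 0 hq (lexx 0) _ _)) _.
- move=> k _; rewrite /soft_threshold /soft_threshold_G; exact: resid0.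
- move=> k; rewrite /soft_threshold /soft_threshold_G resid0 ?normr0 //.
- by rewrite mulr0 mulr_ge0 // ltW.
Qed.
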